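(* Let $n\ge1$, $D\ge1$, and let $X_n=\{\mathbf{x}^0,\ldots,\mathbf{x}^{n-1}\}\subseteq\{0,1\}^D$ consist of $n$ pairwise distinct vectors, indexed so that $\mathbf{a}\cdot\mathbf{x}^0<\cdots<\mathbf{a}\cdot\mathbf{x}^{n-1}$ for some $\mathbf{a}\in\mathbb{Z}^D$. Then there is a five-layer Boolean threshold network with layer sizes $D$, $n$, $\lceil\log_2 n\rceil$, $n$, $D$ that is a perfect autoencoder for $X_n$, with the third layer (of size $\lceil\log_2 n\rceil$) as middle layer.
   Context: A Boolean threshold function is a map $\{0,1\}^h\to\{0,1\}$, $\mathbf{u}\mapsto[\mathbf{w}\cdot\mathbf{u}\ge\theta]$ (value $1$ iff $\mathbf{w}\cdot\mathbf{u}\ge\theta$) with $\mathbf{w}\in\mathbb{Z}^h,\theta\in\mathbb{Z}$. An $L$-layer Boolean threshold network has layers $1,\ldots,L$; layer $1$ is the input; each node of layer $t+1$ computes a Boolean threshold function of the values of layer $t$. If layer $k$ is designated the middle layer, the encoder $\mathbf{f}$ is the map from layer $1$ values to layer $k$ values and the decoder $\mathbf{g}$ the map from layer $k$ values to layer $L$ values; the network is a perfect autoencoder for $X_n$ if $\mathbf{g}(\mathbf{f}(\mathbf{x}^i))=\mathbf{x}^i$ for all $i$. *)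

(* Defs.v *)
From mathcomp Require Import all_boot all_order all_algebra.
Set Implicit Arguments. Unset Strict Implicit. Unset Printing Implicit Defensive.
Import Order.TTheory GRing.Theory Num.Theory.
Local Open Scope ring_scope.

Definition bdot (h : nat) (w : 'I_h -> int) (u : {ffun 'I_h -> bool}) : int :=
  \sum_(i < h) w i * ((u i : nat)%:Z).

Definition threshold_fun (h : nat) (w : 'I_h -> int) (theta : int)
  (u : {ffun 'I_h -> bool}) : bool := theta <= bdot w u.

Record threshold_layer (h m : nat) := ThresholdLayer {
  layer_w : 'I_m -> 'I_h -> int;
  layer_theta : 'I_m -> int }.

Definition apply_layer (h m : nat) (l : threshold_layer h m)
  (u : {ffun 'I_h -> bool}) : {ffun 'I_m -> bool} :=
  [ffun j => threshold_fun (layer_w l j) (layer_theta l j) u].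

Record net5 (s1 s2 s3 s4 s5 : nat) := Net5 {
  net_l12 : threshold_layer s1 s2;
  net_l23 : threshold_layer s2 s3;
  net_l34 : threshold_layer s3 s4;
  net_l45 : threshold_layer s4 s5 }.

Definition encoder3 s1 s2 s3 s4 s5 (N : net5 s1 s2 s3 s4 s5) u :=
  apply_layer (net_l23 N) (apply_layer (net_l12 N) u).
Definition decoder3 s1 s2 s3 s4 s5 (N : net5 s1 s2 s3 s4 s5) v :=
  apply_layer (net_l45 N) (apply_layer (net_l34 N) v).

Definition perfect_autoencoder3 D s2 s3 s4 (N : net5 D s2 s3 s4 D)
  (n : nat) (x : 'I_n -> {ffun 'I_D -> bool}) : Prop :=
  forall i : 'I_n, decoder3 N (encoder3 N (x i)) = x i.

(* Main.v *)
Require Import Defs.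
From mathcomp Require Import all_boot all_order all_algebra zify.
Import Order.TTheory GRing.Theory Num.Theory.
Local Open Scope ring_scope.
Lemma binsum (m i : nat) : (i < 2 ^ m)%N ->
  (\sum_(k < m) 2 ^ k * odd (i %/ 2 ^ k))%N = i.
Proof.
elim: m i => [|m IH] i hi.
  by rewrite big_ord0; move: hi; rewrite expn0; case: i.
rewrite big_ord_recl /= expn0 divn1 mul1n.
under eq_bigr => k _ do rewrite /bump /= add1n expnS divnMA -mulnA.
rewrite -big_distrr /= IH.
  by rewrite divn2 -[in RHS](odd_double_half i) -muln2 mulnC.
by rewrite divn2 -(@ltn_pmul2l 2) // -expnS; move: hi; rewrite -divn2; lia.
Qed.

Definition tw (g : nat -> int) (j : nat) : int :=
  if j is k.+1 then g k.+1 - g k else g 0%N.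

Lemma tw_sum g (i : nat) : \sum_(j < i.+1) tw g j = g i.
Proof.
elim: i => [|i IH]; first by rewrite big_ord1.
by rewrite big_ord_recr /= IH addrC subrK.
Qed.

Lemma therm (h i : nat) g (u : {ffun 'I_h -> bool}) : (i < h)%N ->
  (forall j : 'I_h, u j = (j <= i)%N) -> bdot (fun j : 'I_h => tw g j) u = g i.
Proof.
move=> hi hu; rewrite /bdot -tw_sum (big_ord_widen h (fun j => tw g j) hi).
rewrite [RHS]big_mkcond /=. apply: eq_bigr => j _; rewrite hu ltnS.
by case: (j <= i)%N; rewrite ?mulr1 ?mulr0.
Qed.

Lemma le1b (b : bool) : ((1 : int) <= (b : nat)%:Z) = b.
Proof. by case: b. Qed.

Theorem theorem21 (n D : nat) (hn : (1 <= n)%N) (hD : (1 <= D)%N)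
  (x : 'I_n -> {ffun 'I_D -> bool})
  (hdist : injective x)
  (hord : exists a : 'I_D -> int,
      forall i j : 'I_n, (i < j)%N -> bdot a (x i) < bdot a (x j)) :
  exists N : net5 D n (up_log 2 n) n D, perfect_autoencoder3 N x.
Proof.
case: hord => a ha.
pose i0 : 'I_n := Ordinal hn.
pose m := up_log 2 n.
have hnm : (n <= 2 ^ m)%N by apply: up_logP.
exists (Net5
  (@ThresholdLayer D n (fun _ => a) (fun j => bdot a (x j)))
  (@ThresholdLayer n m (fun k j => tw (fun i => (odd (i %/ 2 ^ k) : nat)%:Z) j) (fun _ => 1))
  (@ThresholdLayer m n (fun j k => (2 ^ k)%N%:Z) (fun j => (j : nat)%:Z))
  (@ThresholdLayer n D (fun d j => tw (fun i => (x (insubd i0 i) d : nat)%:Z) j) (fun _ => 1))).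
move=> i; rewrite /decoder3 /encoder3 /=.
have y1 : forall j : 'I_n, apply_layer (@ThresholdLayer D n (fun _ => a) (fun j => bdot a (x j))) (x i) j = (j <= i)%N.
  move=> j; rewrite ffunE /threshold_fun /=.
  case: (ltngtP j i) => h.
  - by rewrite ltW // ha.
  - by apply/negbTE; rewrite -ltNge ha.
  - by rewrite (val_inj h) lexx.
set u1 := apply_layer _ (x i).
set u2 := apply_layer _ u1.
have y2 : forall k : 'I_m, u2 k = odd (i %/ 2 ^ k).
  move=> k; rewrite ffunE /threshold_fun /=.
  by rewrite (@therm _ _ (fun i => (odd (i %/ 2 ^ k) : nat)%:Z) _ (ltn_ord i) y1) le1b.
set u3 := apply_layer _ u2.
have y3 : forall j : 'I_n, u3 j = (j <= i)%N.
  move=> j; rewrite ffunE /threshold_fun /= /bdot.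
  under eq_bigr => k _ do rewrite y2 -PoszM.
  rewrite -(big_morph _ PoszD (erefl _)) binsum ?lez_nat //.
  exact: leq_trans (ltn_ord i) hnm.
apply/ffunP => d; rewrite ffunE /threshold_fun /=.
rewrite (@therm _ _ (fun i1 : nat => (x (insubd i0 i1) d : nat)%:Z) _ (ltn_ord i) y3) le1b.
by congr (x _ d); apply: val_inj; rewrite val_insubd ltn_ord.
Qed.
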